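(* Let $\langle L,\leq\rangle$ and $\langle K,\leq\rangle$ be complete lattices and $f:L\to K$ a surjective lattice morphism. Let $O:L\to L$ be an operator and $A:L^2\to L^2$ an approximator of $O$ such that $O$ respects $f$ and $A$ respects $f$, and let $A_f:K^2\to K^2$ be the projection of $A$ on $K$. If $(x_j,y_j)_{j\leq\alpha}$ is a well-founded induction of $A$, then $(f(x_j),f(y_j))_{j\leq\alpha}$ is a well-founded induction of $A_f$. Moreover, if $(x_j,y_j)_{j\leq\alpha}$ is terminal, then so is $(f(x_j),f(y_j))_{j\leq\alpha}$.
   Context: A lattice morphism $f:L\to K$ satisfies $f(\bigvee X)=\bigvee f(X)$ and $f(\bigwedge X)=\bigwedge f(X)$ for all $X\subseteq L$. For a complete lattice $L$ with least element $\bot$ and greatest element $\top$, the bilattice $L^2$ carries the precision order $(x,y)\leq_p(u,v)$ iff $x\leq u$ and $v\leq y$; it is a complete lattice. Write $(x,y)_1=x$, $(x,y)_2=y$. An approximator of $O:L\to L$ is a $\leq_p$-monotone operator $A:L^2\to L^2$ with $A(x,x)_1\leq O(x)\leq A(x,x)_2$ for all $x$; approximators are assumed symmetric, i.e. $A(x,y)_1=A(y,x)_2$. An operator $O$ respects $f$ if $f(x)=f(y)$ implies $f(O(x))=f(O(y))$. Let $f^2:L^2\to K^2$, $(x,y)\mapsto(f(x),f(y))$. $A$ respects $f$ if for all $p,q\in L^2$ with $f^2(p)=f^2(q)$ we have $f^2(A(p))=f^2(A(q))$; in that case (with $f$ surjective) the projection $A_f$ is the unique operator $K^2\to K^2$ with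 $A_f\circ f^2=f^2\circ A$. For an operator $B$ on a bilattice $M^2$, a $B$-refinement of $(x,y)$ is a pair $(x',y')$ such that either (i) $(x,y)\leq_p(x',y')\leq_p B(x,y)$ (application refinement), or (ii) $x'=x$ and $B(x,y')_2\leq y'\leq y$ (unfoundedness refinement); it is strict if $(x',y')\neq(x,y)$. A well-founded induction of $B$ is a sequence $(x_i,y_i)_{i\leq\beta}$, $\beta$ an ordinal, with $(x_0,y_0)=(\bot,\top)$, $(x_{i+1},y_{i+1})$ a $B$-refinement of $(x_i,y_i)$ for all $i<\beta$, and $(x_\lambda,y_\lambda)=\bigvee_{\leq_p}\{(x_i,y_i)\mid i<\lambda\}$ for each limit ordinal $\lambda\leq\beta$. It is terminal if $(x_\beta,y_\beta)$ has no strict $B$-refinement. *)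

(* Defs.v *)
Set Implicit Arguments.

Record CompleteLattice := {
  carrier :> Type;
  le : carrier -> carrier -> Prop;
  le_refl : forall x, le x x;
  le_trans : forall x y z, le x y -> le y z -> le x z;
  le_antisym : forall x y, le x y -> le y x -> x = y;
  sup : (carrier -> Prop) -> carrier;
  sup_ub : forall (X : carrier -> Prop) x, X x -> le x (sup X);
  sup_least : forall (X : carrier -> Prop) u,
      (forall x, X x -> le x u) -> le (sup X) u;
  inf : (carrier -> Prop) -> carrier;
  inf_lb : forall (X : carrier -> Prop) x, X x -> le (inf X) x;
  inf_greatest : forall (X : carrier -> Prop) u,
      (forall x, X x -> le u x) -> le u (inf X)
}.

Arguments le {c} _ _.
Arguments sup {c} _.
Arguments inf {c} _.

Definition bot (L : CompleteLattice) : L := sup (fun _ : L => False).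
Definition top (L : CompleteLattice) : L := inf (fun _ : L => False).

Definition image {A B : Type} (f : A -> B) (X : A -> Prop) : B -> Prop :=
  fun y => exists x, X x /\ y = f x.

Definition lattice_morphism {L K : CompleteLattice} (f : L -> K) : Prop :=
  forall X : L -> Prop, f (sup X) = sup (image f X) /\ f (inf X) = inf (image f X).

Definition surjective {A B : Type} (f : A -> B) : Prop :=
  forall y, exists x, f x = y.

Definition le_p {L : CompleteLattice} (p q : L * L) : Prop :=
  le (fst p) (fst q) /\ le (snd q) (snd p).

Definition join_p {L : CompleteLattice} (P : L * L -> Prop) : L * L :=
  (sup (image (@fst L L) P), inf (image (@snd L L) P)).

Definition approximator {L : CompleteLattice} (O : L -> L)
    (A : L * L -> L * L) : Prop :=
  (forall p q, le_p p q -> le_p (A p) (A q)) /\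
  (forall x, le (fst (A (x, x))) (O x) /\ le (O x) (snd (A (x, x)))) /\
  (forall x y, fst (A (x, y)) = snd (A (y, x))).

Definition f2 {L K : Type} (f : L -> K) (p : L * L) : K * K :=
  (f (fst p), f (snd p)).

Definition op_respects {L K : Type} (f : L -> K) (O : L -> L) : Prop :=
  forall x y, f x = f y -> f (O x) = f (O y).

Definition approx_respects {L K : Type} (f : L -> K)
    (A : L * L -> L * L) : Prop :=
  forall p q, f2 f p = f2 f q -> f2 f (A p) = f2 f (A q).

Definition refinement {M : CompleteLattice} (B : M * M -> M * M)
    (p p' : M * M) : Prop :=
  (le_p p p' /\ le_p p' (B p)) \/
  (fst p' = fst p /\ le (snd (B (fst p, snd p'))) (snd p') /\ le (snd p') (snd p)).

Definition strict_refinement {M : CompleteLattice} (B : M * M -> M * M)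
    (p p' : M * M) : Prop :=
  refinement B p p' /\ p' <> p.

(** Index sets {j | j <= beta} of ordinals are represented, up to order
    isomorphism, by a well-ordered type I (strict order lt) with a
    greatest element. *)
Definition well_order_with_max (I : Type) (lt : I -> I -> Prop) (m : I) : Prop :=
  (forall i, ~ lt i i) /\
  (forall i j k, lt i j -> lt j k -> lt i k) /\
  (forall i j, lt i j \/ i = j \/ lt j i) /\
  well_founded lt /\
  (forall i, lt i m \/ i = m).

Definition is_least (I : Type) (lt : I -> I -> Prop) (i : I) : Prop :=
  forall j, ~ lt j i.

Definition is_succ (I : Type) (lt : I -> I -> Prop) (i j : I) : Prop :=
  lt i j /\ forall k, lt i k -> lt k j -> False.

Definition is_limit (I : Type) (lt : I -> I -> Prop) (l : I) : Prop :=
  (exists i, lt i l) /\ (forall i, ~ is_succ lt i l).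

Definition wf_induction {M : CompleteLattice} (B : M * M -> M * M)
    (I : Type) (lt : I -> I -> Prop) (s : I -> M * M) : Prop :=
  (forall i, is_least lt i -> s i = (bot M, top M)) /\
  (forall i j, is_succ lt i j -> refinement B (s i) (s j)) /\
  (forall l, is_limit lt l -> s l = join_p (fun p => exists i, lt i l /\ p = s i)).

Definition terminal {M : CompleteLattice} (B : M * M -> M * M)
    (I : Type) (m : I) (s : I -> M * M) : Prop :=
  forall p', ~ strict_refinement B (s m) p'.

(* Main.v *)
Require Import Defs.
From Stdlib Require Import Classical.

Lemma sup_ext (L : CompleteLattice) (X Y : L -> Prop) :
  (forall x, X x <-> Y x) -> sup X = sup Y.
Proof.
  intros H; apply le_antisym; apply sup_least; intros x Hx; apply sup_ub; apply H; exact Hx.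
Qed.

Lemma inf_ext (L : CompleteLattice) (X Y : L -> Prop) :
  (forall x, X x <-> Y x) -> inf X = inf Y.
Proof.
  intros H; apply le_antisym; apply inf_greatest; intros x Hx; apply inf_lb; apply H; exact Hx.
Qed.

Lemma bot_le (L : CompleteLattice) (x : L) : le (bot L) x.
Proof. apply sup_least; intros _ []. Qed.

Lemma le_top (L : CompleteLattice) (x : L) : le x (top L).
Proof. apply inf_greatest; intros _ []. Qed.

Lemma le_p_trans (L : CompleteLattice) (p q r : L * L) :
  le_p p q -> le_p q r -> le_p p r.
Proof.
  intros [H1 H2] [H3 H4]; split; eapply le_trans; eauto.
Qed.

Section S.
Variables (L K : CompleteLattice) (f : L -> K) (Hmor : lattice_morphism f).

Lemma mono x y : le x y -> le (f x) (f y).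
Proof.
  intros H.
  assert (E : inf (fun z => z = x \/ z = y) = x).
  { apply le_antisym. apply inf_lb; auto.
    apply inf_greatest; intros z [->| ->]; auto using le_refl. }
  rewrite <- E, (proj2 (Hmor _)). apply inf_lb. exists y; auto.
Qed.

Lemma fbot : f (bot L) = bot K.
Proof.
  unfold bot; rewrite (proj1 (Hmor _)). apply sup_ext.
  intros k; split; [intros [z [[] _]] | intros []].
Qed.

Lemma ftop : f (top L) = top K.
Proof.
  unfold top; rewrite (proj2 (Hmor _)). apply inf_ext.
  intros k; split; [intros [z [[] _]] | intros []].
Qed.

Lemma le_p_map p q : le_p p q -> le_p (f2 f p) (f2 f q).
Proof. intros [H1 H2]; split; simpl; apply mono; auto. Qed.

Definition G (u : K) : L := sup (fun z => le (f z) u).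

Lemma G_ub z u : le (f z) u -> le z (G u).
Proof. intros H; apply sup_ub; exact H. Qed.

Lemma fG_eq (Hs : surjective f) u : f (G u) = u.
Proof.
  apply le_antisym.
  - unfold G; rewrite (proj1 (Hmor _)). apply sup_least.
    intros k [z [Hz ->]]; exact Hz.
  - destruct (Hs u) as [v0 Hv]. rewrite <- Hv at 1. apply mono, G_ub.
    rewrite Hv; apply le_refl.
Qed.

Lemma meet_val a b u : le u (f a) -> f b = u ->
  f (inf (fun z => z = a \/ z = b)) = u.
Proof.
  intros H1 H2. rewrite (proj2 (Hmor _)). apply le_antisym.
  - rewrite <- H2. apply inf_lb. exists b; auto.
  - apply inf_greatest. intros k [z [[-> | ->] ->]]; auto. rewrite H2; apply le_refl.
Qed.
End S.
Arguments mono {L K f} Hmor {x y} _.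
Arguments fbot {L K f} Hmor.
Arguments ftop {L K f} Hmor.
Arguments le_p_map {L K f} Hmor {p q} _.
Arguments G {L K} f u.
Arguments G_ub {L K f z u} _.
Arguments fG_eq {L K f} Hmor Hs u.
Arguments meet_val {L K f} Hmor {a b u} _ _.

Lemma classify (I : Type) (lt : I -> I -> Prop) (l : I) :
  is_least lt l \/ (exists i, is_succ lt i l) \/ is_limit lt l.
Proof.
  destruct (classic (exists i, is_succ lt i l)) as [H|H]; auto.
  destruct (classic (exists i, lt i l)) as [H'|H'].
  - right; right; split; auto. intros i Hi; apply H; eauto.
  - left; intros j Hj; apply H'; eauto.
Qed.

Lemma prudent (L : CompleteLattice) (A : L * L -> L * L)
  (Amono : forall p q, le_p p q -> le_p (A p) (A q))
  (I : Type) (lt : I -> I -> Prop) (wf : well_founded lt) (s : I -> L * L) :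
  wf_induction A lt s -> forall i, le_p (s i) (A (s i)).
Proof.
  intros [Hl [Hsu Hli]] i. induction i as [l IH] using (well_founded_ind wf).
  destruct (@classify I lt l) as [H | [[i Hi] | H]].
  - rewrite (Hl l H). split; [apply bot_le | apply le_top].
  - destruct (Hsu i l Hi) as [[H1 H2] | [H1 [H2 H3]]].
    + eapply le_p_trans; [exact H2|]. apply Amono. exact H1.
    + specialize (IH i (proj1 Hi)). revert IH H1 H2 H3.
      destruct (s i) as [x y], (s l) as [x' y']; simpl.
      intros IH H1 H2 H3; subst x'. split; simpl; auto.
      eapply le_trans; [apply (proj1 IH)|].
      apply (Amono (x, y) (x, y')). split; simpl; auto using le_refl.
  - rewrite (Hli l H).
    assert (Hup : forall i, lt i l -> le_p (s i)
              (join_p (fun p => exists i, lt i l /\ p = s i))).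
    { intros i Hi; split; simpl.
      - apply sup_ub. exists (s i); split; eauto.
      - apply inf_lb. exists (s i); split; eauto. }
    split; simpl.
    + apply sup_least. intros k [p [[i [Hi ->]] ->]].
      eapply le_trans; [apply (proj1 (IH i Hi))|].
      apply (proj1 (Amono _ _ (Hup i Hi))).
    + apply inf_greatest. intros k [p [[i [Hi ->]] ->]].
      eapply le_trans; [apply (proj2 (Amono _ _ (Hup i Hi)))|].
      apply (proj2 (IH i Hi)).
Qed.

Theorem proposition3p3 (L K : CompleteLattice) (f : L -> K)
  (Hmor : lattice_morphism f) (Hsurj : surjective f)
  (O : L -> L) (A : L * L -> L * L) (Af : K * K -> K * K)
  (HA : approximator O A) (HOf : op_respects f O) (HAf : approx_respects f A)
  (Hproj : forall p, Af (f2 f p) = f2 f (A p))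
  (I : Type) (lt : I -> I -> Prop) (alpha : I)
  (HI : well_order_with_max lt alpha) (s : I -> L * L) :
  wf_induction A lt s ->
  wf_induction Af lt (fun j => f2 f (s j)) /\
  (terminal A alpha s -> terminal Af alpha (fun j => f2 f (s j))).
Proof.
  intros Hwf.
  destruct HA as [Amono _].
  destruct HI as [_ [_ [_ [wf _]]]].
  pose proof (@prudent L A Amono I lt wf s Hwf) as Pr.
  destruct Hwf as [Hl [Hsu Hli]].
  split.
  - split; [|split].
    + intros i Hi. unfold f2; rewrite (Hl i Hi); simpl.
      rewrite (fbot Hmor), (ftop Hmor). reflexivity.
    + intros i j Hij. cbv beta.
      destruct (Hsu i j Hij) as [[H1 H2] | [H1 [H2 H3]]].
      * left. split; [apply (le_p_map Hmor); auto|].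
        rewrite Hproj. apply (le_p_map Hmor); auto.
      * right. revert H1 H2 H3. destruct (s i) as [x y], (s j) as [x' y'].
        simpl. intros H1 H2 H3. subst x'.
        pose proof (Hproj (x, y')) as HP; unfold f2 in HP |- *; simpl in HP |- *; rewrite HP; simpl.
        repeat split; auto; apply (mono Hmor); auto.
    + intros l Hlim. cbv beta. rewrite (Hli l Hlim). unfold join_p, f2; simpl.
      rewrite (proj1 (Hmor _)), (proj2 (Hmor _)). f_equal.
      * apply sup_ext. intros k; split.
        -- intros [z [[p [[i [Hi ->]] ->]] ->]].
           exists (f2 f (s i)); split; [exists i; auto | reflexivity].
        -- intros [p [[i [Hi ->]] ->]].
           exists (fst (s i)); split; [exists (s i); split; [exists i; auto | reflexivity] | reflexivity].
      * apply inf_ext. intros k; split.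
        -- intros [z [[p [[i [Hi ->]] ->]] ->]].
           exists (f2 f (s i)); split; [exists i; auto | reflexivity].
        -- intros [p [[i [Hi ->]] ->]].
           exists (snd (s i)); split; [exists (s i); split; [exists i; auto | reflexivity] | reflexivity].
  - intros Hterm. unfold terminal in *. cbv beta.
    specialize (Pr alpha). revert Hterm Pr. destruct (s alpha) as [x y].
    intros Hterm Pr [u v] [Href Hne].
    pose proof (Hproj (x, y)) as HP0. unfold f2 in *; simpl in *.
    unfold refinement, le_p in Href; simpl in Href. rewrite HP0 in Href; simpl in Href.
    destruct Pr as [Pr1 Pr2].
    destruct Href as [[[H1 H2] [H3 H4]] | [H1 [H2 H3]]]; simpl in *.
    + apply (Hterm (inf (fun z => z = fst (A (x, y)) \/ z = G f u),
                    inf (fun z => z = y \/ z = G f v))).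
      split.
      * left. split; split; simpl.
        -- apply inf_greatest; intros z [-> | ->]; auto. apply G_ub; auto.
        -- apply inf_lb; auto.
        -- apply inf_lb; auto.
        -- apply inf_greatest; intros z [-> | ->]; auto. apply G_ub; auto.
      * intros E. apply Hne. injection E; intros E2 E1.
        f_equal; [rewrite <- E1 at 1 | rewrite <- E2 at 1]; symmetry;
          apply (meet_val Hmor); auto; apply (fG_eq Hmor Hsurj).
    + subst u. set (w := inf (fun z => z = y \/ z = G f v)).
      assert (Hw : f w = v) by (apply (meet_val Hmor); auto; apply (fG_eq Hmor Hsurj)).
      assert (Hwy : le w y) by (apply inf_lb; auto).
      apply (Hterm (x, w)). split.
      * right. simpl. repeat split; auto.
        apply inf_greatest; intros z [-> | ->].
        -- eapply le_trans; [|exact Pr2].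
           apply (proj2 (Amono (x, y) (x, w) (conj (le_refl _ _) Hwy))).
        -- apply G_ub. pose proof (Hproj (x, w)) as HP. unfold f2 in HP; simpl in HP.
           rewrite Hw in HP. rewrite HP in H2. exact H2.
      * intros E. apply Hne. injection E; intros E2. rewrite <- Hw, E2. reflexivity.
Qed.
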